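(* Let $k$ be a field of characteristic not $2$ or $3$, let $n\ge2$, let $\mathcal{A}\in k^{n+1}\otimes\operatorname{Sym}_2k^3$, and let $X=Z(\det\mathcal{A}(\mathbf{x},\cdot,\cdot))\subseteq\mathbb{P}^n$ be the associated symmetroid hypersurface of degree $3$. If the Cayley variety of $\mathcal{A}$ is non-empty, then $X$ contains a linear subspace of $\mathbb{P}^n$ of dimension at least $n-2$, along which $X$ is singular.
   Context: $\mathcal{A}$ is viewed as an $(n+1)$-tuple $(A_0,\dots,A_n)$ of symmetric $3\times3$ matrices, $\mathcal{A}(\mathbf{x},\cdot,\cdot)=\sum x_iA_i$, and the Cayley variety is $Z(\mathbf{y}^TA_0\mathbf{y},\dots,\mathbf{y}^TA_n\mathbf{y})\subseteq\mathbb{P}^2$. *)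

(* Defs.v *)
From HB Require Import structures.
From mathcomp Require Import all_boot all_order all_algebra.
From mathcomp Require Import mpoly.
Set Implicit Arguments. Unset Strict Implicit. Unset Printing Implicit Defensive.
Import Order.TTheory GRing.Theory.
Local Open Scope ring_scope.

Definition symmat_of (k : fieldType) (n : nat) (A : 'I_n.+1 -> 'M[k]_3)
  : 'M[{mpoly k[n.+1]}]_3 :=
  \matrix_(a < 3, b < 3) \sum_(l < n.+1) (A l a b) *: 'X_l.

Definition symmetroid_poly (k : fieldType) (n : nat) (A : 'I_n.+1 -> 'M[k]_3)
  : {mpoly k[n.+1]} := \det (symmat_of A).

Definition ev_row (k : fieldType) (n : nat) (p : {mpoly k[n.+1]})
  (v : 'rV[k]_n.+1) : k := p.@[fun j => v 0 j].

Definition cayley_nonempty (k : fieldType) (n : nat) (A : 'I_n.+1 -> 'M[k]_3) :=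
  exists2 y : 'cV[k]_3, y != 0 & forall i, y^T *m A i *m y = 0.

(* The hypersurface Z(F) in P^n contains the projective linear subspace P(W)
   (W = row space of B) and is singular along it: F and all partials of F
   vanish at every point of W. *)
Definition singular_along (k : fieldType) (n : nat) (F : {mpoly k[n.+1]})
  (B : 'M[k]_n.+1) :=
  forall v : 'rV[k]_n.+1, (v <= B)%MS ->
    ev_row F v = 0 /\ forall j : 'I_n.+1, ev_row (mderiv j F) v = 0.

(* Main.v *)
Require Import Defs.
From HB Require Import structures.
From mathcomp Require Import all_boot all_order all_algebra.
From mathcomp Require Import mpoly zify fingroup perm.
Import Order.TTheory GRing.Theory.
Local Open Scope ring_scope.

Section Pz.
Variables (k : fieldType) (n : nat) (e : 'I_n.+1 -> k).
Definition Pz (p : {mpoly k[n.+1]}) :=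
  meval e p = 0 /\ forall j, meval e (mderiv j p) = 0.

Lemma Pz0 : Pz 0.
Proof. by split; [rewrite meval0 | move=> j; rewrite mderiv0 meval0]. Qed.

Lemma PzD p q : Pz p -> Pz q -> Pz (p + q).
Proof.
move=> [h1 h2] [h3 h4]; split; first by rewrite mevalD h1 h3 addr0.
by move=> j; rewrite mderivD mevalD h2 h4 addr0.
Qed.

Lemma PzMl p q : Pz p -> Pz (q * p).
Proof.
move=> [h1 h2]; split; first by rewrite mevalM h1 mulr0.
by move=> j; rewrite mderivM mevalD !mevalM h1 h2 !mulr0 addr0.
Qed.

Lemma PzMr p q : Pz p -> Pz (p * q).
Proof. by move=> h; rewrite mulrC; apply: PzMl. Qed.

Lemma Pzff f g : meval e f = 0 -> meval e g = 0 -> Pz (f * g).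
Proof.
move=> h1 h2; split; first by rewrite mevalM h1 mul0r.
by move=> j; rewrite mderivM mevalD !mevalM h1 h2 mulr0 mul0r addr0.
Qed.

Lemma Pzsum (I : finType) (F : I -> {mpoly k[n.+1]}) :
  (forall i, Pz (F i)) -> Pz (\sum_i F i).
Proof. move=> h; apply: (big_ind Pz) => //; [exact: Pz0 | exact: PzD]. Qed.

Lemma meval_lin (c : 'I_n.+1 -> k) :
  meval e (\sum_l c l *: 'X_l) = \sum_l c l * e l.
Proof. rewrite raddf_sum; apply: eq_bigr => l _ /=. by rewrite mevalZ mevalXU. Qed.
End Pz.
Lemma symmat_sum (k : fieldType) n (C : 'I_n.+1 -> 'M[k]_3) :
  symmat_of C = \sum_l 'X_l *: map_mx (@mpolyC n.+1 k) (C l).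
Proof.
apply/matrixP => a b; rewrite !mxE summxE; apply: eq_bigr => l _.
by rewrite !mxE mulrC mul_mpolyC.
Qed.

Lemma symmat_conj (k : fieldType) n (A : 'I_n.+1 -> 'M[k]_3) (Q : 'M[k]_3) :
  (map_mx (@mpolyC n.+1 k) Q)^T *m symmat_of A *m map_mx (@mpolyC n.+1 k) Q
  = symmat_of (fun l => Q^T *m A l *m Q).
Proof.
rewrite !symmat_sum mulmx_sumr mulmx_suml; apply: eq_bigr => l _.
by rewrite -scalemxAr -scalemxAl !map_mxM map_trmx.
Qed.

Theorem lemma4p0p8 (k : fieldType) (n : nat)
  (hchar2 : 2%N \notin [pchar k]) (hchar3 : 3%N \notin [pchar k])
  (hn : (2 <= n)%N)
  (A : 'I_n.+1 -> 'M[k]_3) (hsym : forall i, (A i)^T = A i) :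
  cayley_nonempty A ->
  exists B : 'M[k]_n.+1,
    (n.-1 <= \rank B)%N /\ singular_along (symmetroid_poly A) B.
Proof.
move=> [y ynz hy].
have [a0 ha0] : exists a : 'I_3, y a 0 != 0.
  case: (pickP (fun a : 'I_3 => y a 0 != 0)) => [a ha | h]; first by exists a.
  exfalso; move/eqP: ynz; apply; apply/matrixP => a b.
  by rewrite (ord1 b) mxE; move/negbFE/eqP: (h a).
have ex : exists m, (m < 3)%N && (y (inord m) 0 != 0).
  by exists (val a0); rewrite ltn_ord inord_val.
have [i [yi ymin]] : exists i : 'I_3, y i 0 != 0 /\
    forall a : 'I_3, (a < i)%N -> y a 0 = 0.
  case: (ex_minnP ex) => m /andP[m3 ym] hmin.
  exists (inord m); split => // a ha; apply/eqP; apply: contraTT ha => hne.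
  rewrite -leqNgt inordK //; apply: hmin; by rewrite ltn_ord inord_val.
pose Q : 'M[k]_3 := \matrix_(a, b) if b == i then y a 0 else (a == b)%:R.
have hQcol : forall a, Q a i = y a 0 by move=> a; rewrite mxE eqxx.
have detQ : \det Q = y i 0.
  rewrite det_trig; last first.
    apply/is_trig_mxP => a b hab; rewrite mxE.
    case: eqP => [eb | _]; first by rewrite eb in hab; exact: ymin.
    rewrite (_ : (a == b) = false) //; apply/negbTE; apply/eqP => eab.
    by rewrite eab ltnn in hab.
  rewrite (bigD1 i) //= hQcol big1 ?mulr1 // => a hai.
  by rewrite mxE (negbTE hai) eqxx.
pose Mk : 'M[k]_(n.+1, 3) := \matrix_(l, j) (A l *m y) j 0.
have hMy : Mk *m y = 0.
  apply/matrixP => l z; rewrite (ord1 z) !mxE.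
  have e : y^T *m A l = (A l *m y)^T by rewrite trmx_mul hsym.
  have := hy l; rewrite e => /matrixP/(_ 0 0); rewrite !mxE => h.
  apply: etrans h; apply: eq_bigr => c _; by rewrite !mxE.
have r1 : (1 <= \rank (kermx Mk^T))%N.
  have : (y^T <= kermx Mk^T)%MS.
    by apply/sub_kermxP; rewrite -trmx_mul hMy trmx0.
  by move/mxrankS; rewrite rank_rV trmx_eq0 ynz.
exists (kermx Mk); split.
  move: r1; rewrite !mxrank_ker mxrank_tr.
  have := rank_leq_col Mk; lia.
move=> v /sub_kermxP hv.
pose e := fun j => v 0 j.
pose Av := \sum_l v 0 l *: A l.
have hAv : Av *m y = 0.
  have -> : Av *m y = (v *m Mk)^T.
    apply/matrixP => a z; rewrite (ord1 z) mulmx_suml summxE [RHS]mxE [RHS]mxE.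
    by apply: eq_bigr => l _; rewrite -scalemxAl !mxE.
  by rewrite hv trmx0.
have hAvT : Av^T = Av.
  apply/matrixP => a b; rewrite mxE !summxE; apply: eq_bigr => l _.
  by rewrite !mxE -[in LHS](hsym l) mxE.
pose C := fun l => Q^T *m A l *m Q.
pose N := symmat_of C.
have hev : forall a b, meval e (N a b) = (Q^T *m Av *m Q) a b.
  move=> a b; rewrite mxE meval_lin.
  have -> : Q^T *m Av *m Q = \sum_l v 0 l *: C l.
    rewrite mulmx_sumr mulmx_suml; apply: eq_bigr => l _.
    by rewrite -scalemxAr -scalemxAl.
  rewrite summxE; apply: eq_bigr => l _. by rewrite [RHS]mxE mulrC.
have gen : forall (X : 'M[k]_3) a, (X *m Q) a i = (X *m y) a 0.
  by move=> X a; rewrite !mxE; apply: eq_bigr => c _; rewrite hQcol.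
have hcol : forall a, (Q^T *m Av *m Q) a i = 0.
  by move=> a; rewrite gen -mulmxA hAv mulmx0 mxE.
have hrow : forall b, (Q^T *m Av *m Q) i b = 0.
  move=> b; have sym : (Q^T *m Av *m Q)^T = Q^T *m Av *m Q.
    by rewrite !trmx_mul trmxK hAvT mulmxA.
  by rewrite -sym mxE hcol.
have hNii : N i i = 0.
  rewrite mxE big1 // => l _.
  suff -> : C l i i = 0 by rewrite scale0r.
  rewrite /C gen -mulmxA.
  have := hy l; rewrite -mulmxA => /matrixP/(_ 0 0); rewrite !mxE => h.
  apply: etrans h; apply: eq_bigr => c _. by rewrite [Q^T _ _]mxE hQcol [y^T _ _]mxE.
have hdet : \det N = ((\det Q) ^+ 2)%:MP * symmetroid_poly A.
  rewrite /N -symmat_conj !det_mulmx det_tr !det_map_mx /symmetroid_poly.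
  by rewrite [_ * _ * _]mulrC mulrA -mpolyCM expr2.
have PN : Pz k n e (\det N).
  rewrite /determinant; apply: Pzsum => s; apply: PzMl.
  case: (eqVneq (s i) i) => hsi.
    by rewrite (bigD1 i) //= hsi hNii mul0r; exact: Pz0.
  pose r2 := (s^-1)%g i.
  have hr2 : r2 != i.
    by apply: contra hsi => /eqP h; rewrite -{1}h /r2 permKV.
  rewrite (bigD1 i) //= (bigD1 r2) //= mulrA; apply: PzMr; apply: Pzff.
    by rewrite hev hrow.
  by rewrite /r2 permKV hev hcol.
have cnz : (\det Q) ^+ 2 != 0 by rewrite detQ expf_neq0.
move: PN; rewrite hdet => -[h1 h2]; split.
  move: h1; rewrite mevalM mevalC => /eqP; rewrite mulf_eq0 (negbTE cnz) /=.
  by move/eqP.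
move=> j; move: (h2 j); rewrite mderiv_mulC mevalM mevalC => /eqP.
by rewrite mulf_eq0 (negbTE cnz) /= => /eqP.
Qed.
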